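(* Let $S$ be a semiring and $P$ a left $S$-semimodule. If $0\to K\xrightarrow{\iota}L\xrightarrow{\pi}M\to0$ is a short exact sequence of left $S$-semimodules and $P$ is $L$-$e$-projective, then $P$ is $K$-$e$-projective and $M$-$e$-projective.
   Context: A semiring $(S,+,0,\cdot,1)$ consists of a commutative monoid $(S,+,0)$ and a monoid $(S,\cdot,1)$ with $0\neq 1$, absorbing zero and both distributive laws; left $S$-semimodules and $S$-linear maps are as for modules without subtraction. For an $S$-linear $h:X\to Y$, $\mathrm{Ker}(h)=\{x\mid h(x)=0\}$; $h$ is $k$-normal if $h(x)=h(x')$ implies $x+k=x'+k'$ for some $k,k'\in\mathrm{Ker}(h)$. A short exact sequence $0\to A\xrightarrow{f}B\xrightarrow{g}C\to0$ (of semimodules or commutative monoids) means: $f$ injective, $f(A)=\mathrm{Ker}(g)$, $g$ surjective and $k$-normal. For a left $S$-semimodule $X$, $P$ is $X$-$e$-projective if for every short exact sequence $0\to A\xrightarrow{f}X\xrightarrow{g}C\to0$ of left $S$-semimodules with middle term $X$, the sequence $0\to\mathrm{Hom}_S(P,A)\xrightarrow{f\circ-}\mathrm{Hom}_S(P,X)\xrightarrow{g\circ-}\mathrm{Hom}_S(P,C)\to0$ is a short exact sequence of commutative monoids (Hom-sets with pointwise addition). *)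

(* Defs.v *)
From HB Require Import structures.
From mathcomp Require Import all_boot all_order all_algebra.
Set Implicit Arguments. Unset Strict Implicit. Unset Printing Implicit Defensive.
Import GRing.Theory.
Local Open Scope ring_scope.

Definition k_normal (X Y : nmodType) (h : X -> Y) : Prop :=
  forall x x', h x = h x' ->
    exists k k', h k = 0 /\ h k' = 0 /\ x + k = x' + k'.

Definition ses_semimod (S : nzSemiRingType) (A B C : lSemiModType S)
  (f : {linear A -> B}) (g : {linear B -> C}) : Prop :=
  injective f /\
  (forall b : B, g b = 0 <-> exists a : A, f a = b) /\
  (forall c : C, exists b : B, g b = c) /\
  k_normal g.

(* The induced sequence of commutative monoids
   0 -> Hom_S(P,A) -(f o -)-> Hom_S(P,B) -(g o -)-> Hom_S(P,C) -> 0
   (addition and zero of Hom-sets are pointwise, equality of S-linear maps is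
   pointwise equality) is a short exact sequence of commutative monoids. *)
Definition ses_hom (S : nzSemiRingType) (P A B C : lSemiModType S)
  (f : {linear A -> B}) (g : {linear B -> C}) : Prop :=
  (forall a1 a2 : {linear P -> A},
      (forall p, f (a1 p) = f (a2 p)) -> forall p, a1 p = a2 p) /\
  (forall b : {linear P -> B},
      (forall p, g (b p) = 0) <->
      exists a : {linear P -> A}, forall p, f (a p) = b p) /\
  (forall c : {linear P -> C},
      exists b : {linear P -> B}, forall p, g (b p) = c p) /\
  (forall b b' : {linear P -> B},
      (forall p, g (b p) = g (b' p)) ->
      exists k k' : {linear P -> B},
        (forall p, g (k p) = 0) /\ (forall p, g (k' p) = 0) /\
        (forall p, b p + k p = b' p + k' p)).

Definition e_projective (S : nzSemiRingType) (X P : lSemiModType S) : Prop :=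
  forall (A C : lSemiModType S) (f : {linear A -> X}) (g : {linear X -> C}),
    ses_semimod f g -> ses_hom P f g.

(* Main.v *)
Require Import Defs.
From HB Require Import structures.
From mathcomp Require Import all_boot all_order all_algebra.
From Stdlib Require Import ClassicalEpsilon.
Set Implicit Arguments. Unset Strict Implicit. Unset Printing Implicit Defensive.
Import GRing.Theory.
Local Open Scope ring_scope.

Section MkLin.
Variables (S : nzSemiRingType) (U V : lSemiModType S) (f : U -> V).
Hypothesis Hf : semilinear_for *:%R f.
Definition mkLin := let _ := Hf in f.
HB.instance Definition _ := GRing.isSemilinear.Build S U V *:%R mkLin Hf.
Lemma mkLinE x : (mkLin : {linear U -> V}) x = f x. Proof. by []. Qed.
End MkLin.

Section Ker.
Variables (S : nzSemiRingType) (X Y : lSemiModType S) (h : {linear X -> Y}).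
Record kerT := KerT { kval : X; kvalP : h kval == 0 }.
HB.instance Definition _ := [isSub for kval].
HB.instance Definition _ := [Choice of kerT by <:].
Lemma ker0 : h 0 == 0. Proof. by rewrite linear0. Qed.
Definition kzero := KerT ker0.
Lemma kerD (x y : kerT) : h (kval x + kval y) == 0.
Proof. by rewrite linearD (eqP (kvalP x)) (eqP (kvalP y)) addr0. Qed.
Definition kadd x y := KerT (kerD x y).
Lemma kerZ a (x : kerT) : h (a *: kval x) == 0.
Proof. by rewrite linearZ_LR (eqP (kvalP x)) scaler0. Qed.
Definition kscale a x := KerT (kerZ a x).
Lemma kaddA : associative kadd. Proof. by move=> *; apply: val_inj; rewrite /= addrA. Qed.
Lemma kaddC : commutative kadd. Proof. by move=> *; apply: val_inj; rewrite /= addrC. Qed.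
Lemma kadd0 : left_id kzero kadd. Proof. by move=> *; apply: val_inj; rewrite /= add0r. Qed.
HB.instance Definition _ := GRing.isNmodule.Build kerT kaddA kaddC kadd0.
Lemma kscaleA a b v : kscale a (kscale b v) = kscale (a * b) v.
Proof. by apply: val_inj; rewrite /= scalerA. Qed.
Lemma kscale0 v : kscale 0 v = 0.
Proof. by apply: val_inj; rewrite /= scale0r. Qed.
Lemma kscale1 : left_id 1 kscale.
Proof. by move=> v; apply: val_inj; rewrite /= scale1r. Qed.
Lemma kscaleDr : right_distributive kscale +%R.
Proof. by move=> a u v; apply: val_inj; rewrite /= scalerDr. Qed.
Lemma kscaleDl v : {morph kscale^~ v: a b / a + b}.
Proof. by move=> a b; apply: val_inj; rewrite /= scalerDl. Qed.
HB.instance Definition _ := GRing.Nmodule_isLSemiModule.Build S kerT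
  kscaleA kscale0 kscale1 kscaleDr kscaleDl.
Lemma kval_lin : semilinear_for *:%R (kval : kerT -> X).
Proof. by split. Qed.
Definition kvalL : {linear kerT -> X} := mkLin kval_lin.
End Ker.

Definition pb (P : Prop) : bool := if excluded_middle_informative P then true else false.
Lemma pbP P : reflect P (pb P).
Proof. by rewrite /pb; case: excluded_middle_informative => h; constructor. Qed.

Section Quot.
Variables (S : nzSemiRingType) (X A : lSemiModType S) (F : {linear A -> X}).
Definition E (x y : X) := exists a a', x + F a = y + F a'.
Lemma Erefl x : E x x. Proof. by exists 0, 0. Qed.
Lemma Esym x y : E x y -> E y x. Proof. by case=> a [a' H]; exists a', a. Qed.
Lemma Etrans x y z : E x y -> E y z -> E x z.
Proof.
case=> a [a' H1] [b [b' H2]]; exists (a + b), (b' + a').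
by rewrite !linearD addrA H1 addrAC H2 -addrA.
Qed.
Lemma ED x x' y y' : E x x' -> E y y' -> E (x + y) (x' + y').
Proof.
case=> a [a' H1] [b [b' H2]]; exists (a + b), (a' + b').
by rewrite !linearD addrACA H1 H2 addrACA.
Qed.
Lemma EZ c x y : E x y -> E (c *: x) (c *: y).
Proof. by case=> a [a' H]; exists (c *: a), (c *: a'); rewrite !linearZ -!scalerDr H. Qed.
Lemma Eex x : exists y, pb (E x y). Proof. by exists x; apply/pbP/Erefl. Qed.
Definition canon x := xchoose (Eex x).
Lemma canonE x : E x (canon x). Proof. exact/pbP/(xchooseP (Eex x)). Qed.
Lemma canon_eq x y : E x y -> canon x = canon y.
Proof.
move=> H; apply: eq_xchoose => z; apply/idP/idP => /pbP H'; apply/pbP.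
  exact: Etrans (Esym H) H'.
exact: Etrans H H'.
Qed.
Lemma canonK x : canon (canon x) == canon x.
Proof. by apply/eqP/canon_eq/Esym/canonE. Qed.
Record quotT := QuotT { qv : X; qvP : canon qv == qv }.
HB.instance Definition _ := [isSub for qv].
HB.instance Definition _ := [Choice of quotT by <:].
Definition q x := QuotT (canonK x).
Lemma qP x y : q x = q y <-> E x y.
Proof.
split.
  move=> H; have : canon x = canon y by move: (congr1 qv H).
  move=> H'; apply: Etrans (canonE x) _; rewrite H'; exact/Esym/canonE.
by move=> H; apply: val_inj; rewrite /= (canon_eq H).
Qed.
Lemma qvK u : q (qv u) = u.
Proof. by apply: val_inj; rewrite /= (eqP (qvP u)). Qed.
Lemma qq x : E (qv (q x)) x. Proof. exact/Esym/canonE. Qed.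
Lemma q_addl x y : q (qv (q x) + y) = q (x + y).
Proof. by apply/qP/ED; [apply: qq | apply: Erefl]. Qed.
Lemma q_addr x y : q (x + qv (q y)) = q (x + y).
Proof. by apply/qP/ED; [apply: Erefl | apply: qq]. Qed.
Lemma q_scale c x : q (c *: qv (q x)) = q (c *: x).
Proof. by apply/qP/EZ/qq. Qed.
Definition qzero := q 0.
Definition qadd u v := q (qv u + qv v).
Definition qscale c u := q (c *: qv u).
Lemma qaddA : associative qadd.
Proof. by move=> u v w; rewrite /qadd q_addl q_addr addrA. Qed.
Lemma qaddC : commutative qadd. Proof. by move=> u v; rewrite /qadd addrC. Qed.
Lemma qadd0 : left_id qzero qadd.
Proof. by move=> u; rewrite /qadd /qzero q_addl add0r qvK. Qed.
HB.instance Definition _ := GRing.isNmodule.Build quotT qaddA qaddC qadd0.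
Lemma qaddE (u v : quotT) : u + v = q (qv u + qv v). Proof. by []. Qed.
Lemma qscaleA a b v : qscale a (qscale b v) = qscale (a * b) v.
Proof. by rewrite /qscale q_scale scalerA. Qed.
Lemma qscale0 v : qscale 0 v = 0.
Proof. by rewrite /qscale scale0r. Qed.
Lemma qscale1 : left_id 1 qscale.
Proof. by move=> v; rewrite /qscale scale1r qvK. Qed.
Lemma qscaleDl v : {morph qscale^~ v: a b / a + b}.
Proof. by move=> a b; rewrite /qscale (qaddE (q _) (q _)) q_addl q_addr scalerDl. Qed.
Lemma qscaleDr : right_distributive qscale +%R.
Proof.
move=> a u v; rewrite /qscale (qaddE u v) (qaddE (q _) (q _)).
by rewrite q_addl q_addr q_scale scalerDr.
Qed.
HB.instance Definition _ := GRing.Nmodule_isLSemiModule.Build S quotT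
  qscaleA qscale0 qscale1 qscaleDr qscaleDl.
Lemma q_lin : semilinear_for *:%R q.
Proof.
split.
  by move=> c x; rewrite /= /GRing.scale /= /qscale q_scale.
by move=> x y; rewrite (qaddE (q _) (q _)) q_addl q_addr.
Qed.
Definition qL : {linear X -> quotT} := mkLin q_lin.
Lemma qL0 x : qL x = 0 <-> E x 0.
Proof. exact: qP. Qed.
End Quot.
Lemma comp_lin (S : nzSemiRingType) (U V W : lSemiModType S)
  (f : {linear V -> W}) (b : {linear U -> V}) :
  semilinear_for *:%R (fun p => f (b p)).
Proof. by split=> [c x|x y]; rewrite ?linearZ_LR ?linearD. Qed.

Lemma ses12 (S : nzSemiRingType) (P A B C : lSemiModType S)
  (f : {linear A -> B}) (g : {linear B -> C}) : ses_semimod f g ->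
  (forall a1 a2 : {linear P -> A},
      (forall p, f (a1 p) = f (a2 p)) -> forall p, a1 p = a2 p) /\
  (forall b : {linear P -> B},
      (forall p, g (b p) = 0) <->
      exists a : {linear P -> A}, forall p, f (a p) = b p).
Proof.
case=> finj [fker _]; split.
  by move=> a1 a2 H p; apply: finj.
move=> b; split; last first.
  by case=> a Ha p; rewrite -Ha; apply/fker; exists (a p).
move=> Hb.
have ex p : exists a, f a == b p.
  by have [a Ha] := (fker (b p)).1 (Hb p); exists a; apply/eqP.
pose a0 p := xchoose (ex p).
have fa0 p : f (a0 p) = b p by apply/eqP/(xchooseP (ex p)).
have lin : semilinear_for *:%R a0.
  split=> [c x|x y]; apply: finj.
    by rewrite linearZ_LR !fa0 linearZ_LR.
  by rewrite linearD !fa0 linearD.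
by exists (mkLin lin) => p; apply: fa0.
Qed.

Lemma projM (S : nzSemiRingType) (P K L M : lSemiModType S)
  (iota : {linear K -> L}) (pi : {linear L -> M}) :
  ses_semimod iota pi -> e_projective L P -> e_projective M P.
Proof.
move=> Hs HL A C f g Hfg.
have [H1 H2] := ses12 P Hfg.
have HI := HL _ _ _ _ Hs.
case: (Hs) => iinj [iker [isurj iknorm]].
case: (Hfg) => finj [fker [gsurj gknorm]].
pose h : {linear L -> C} := mkLin (comp_lin g pi).
have hE x : h x = g (pi x) by [].
have Hses : ses_semimod (kvalL h) h.
  split; first exact: val_inj.
  split.
    move=> b; split; last by case=> a <-; apply/eqP/kvalP.
    by move=> Hb; exists (KerT (introT eqP Hb)).
  split.
    move=> c; have [m Hm] := gsurj c; have [l Hl] := isurj m.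
    by exists l; rewrite hE Hl.
  move=> x x'; rewrite !hE => Hx.
  have [k [k' [Hk [Hk' Hkk]]]] := gknorm _ _ Hx.
  have [l Hl] := isurj k; have [l' Hl'] := isurj k'.
  have Hp : pi (x + l) = pi (x' + l') by rewrite !linearD Hl Hl' Hkk.
  have [u [u' [Hu [Hu' Huu]]]] := iknorm _ _ Hp.
  exists (l + u), (l' + u'); rewrite !hE !linearD Hl Hl' Hu Hu' linear0 !addr0 Hk Hk'.
  by split=> //; split=> //; rewrite !addrA.
have HK := HL _ _ _ _ Hses.
case: HK => _ [_ [hsurj hknorm]].
case: HI => _ [_ [pisurj _]].
split=> //; split=> //; split.
  move=> c; have [b Hb] := hsurj c.
  by exists (mkLin (comp_lin pi b)) => p; rewrite -Hb.
move=> m m' Hm.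
have [l Hl] := pisurj m; have [l' Hl'] := pisurj m'.
have Hh p : h (l p) = h (l' p) by rewrite !hE Hl Hl' Hm.
have [k [k' [Hk [Hk' Hkk]]]] := hknorm _ _ Hh.
exists (mkLin (comp_lin pi k)), (mkLin (comp_lin pi k')).
split; first by move=> p; rewrite -hE Hk.
split; first by move=> p; rewrite -hE Hk'.
by move=> p; rewrite /= -Hl -Hl' -!linearD Hkk.
Qed.

Lemma projK (S : nzSemiRingType) (P K L M : lSemiModType S)
  (iota : {linear K -> L}) (pi : {linear L -> M}) :
  ses_semimod iota pi -> e_projective L P -> e_projective K P.
Proof.
move=> Hs HL A C f g Hfg.
have [H1 H2] := ses12 P Hfg.
have HI := HL _ _ _ _ Hs.
case: (Hs) => iinj [iker [isurj iknorm]].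
case: (Hfg) => finj [fker [gsurj gknorm]].
pose F : {linear A -> L} := mkLin (comp_lin iota f).
have FE a : F a = iota (f a) by [].
have piF a : pi (F a) = 0 by rewrite FE; apply/iker; exists (f a).
have gf a : g (f a) = 0 by apply/fker; exists a.
have Epi x y : E F x y -> pi x = pi y.
  by case=> a [a' H]; have := congr1 pi H; rewrite !linearD !piF !addr0.
have Eiota k k' : g k = g k' -> E F (iota k) (iota k').
  move=> Hg; have [u [u' [Hu [Hu' Huu]]]] := gknorm _ _ Hg.
  have [a Ha] := (fker u).1 Hu; have [a' Ha'] := (fker u').1 Hu'.
  by exists a, a'; rewrite !FE Ha Ha' -!linearD Huu.
have iotaE k k' : E F (iota k) (iota k') -> g k = g k'.
  case=> a [a' H]; rewrite !FE -!linearD in H.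
  by have := congr1 g (iinj _ _ H); rewrite !linearD !gf !addr0.
have Qker b : qL F b = 0 <-> exists a, F a = b.
  split; last by case=> a <-; apply/qL0; exists 0, a; rewrite linear0 addr0 add0r.
  move/qL0 => Hb; have := Epi _ _ Hb; rewrite linear0 => /iker [k Hk].
  move: Hb; rewrite -Hk -(linear0 iota) => /iotaE; rewrite linear0 => /fker [a Ha].
  by exists a; rewrite FE Ha.
have Hses : ses_semimod F (qL F).
  split; first by move=> a a' /iinj /finj.
  split; first exact: Qker.
  split; first by move=> z; exists (qv z); apply: qvK.
  move=> x x' /qP [a [a' H]]; exists (F a), (F a').
  by split; [apply/Qker; exists a | split; [apply/Qker; exists a' | ]].
have [Qinj [Qmid [Qsurj Qkn]]] := HL _ _ _ _ Hses.
case: HI => _ [Imid _].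
have ex c : exists k, g k == c by have [k Hk] := gsurj c; exists k; apply/eqP.
pose kc c := xchoose (ex c).
have gkc c : g (kc c) = c by apply/eqP/(xchooseP (ex c)).
pose j c := qL F (iota (kc c)).
have jlin : semilinear_for *:%R j.
  split=> [c x|x y]; rewrite /j.
    rewrite -!linearZ_LR; apply/qP/Eiota; by rewrite linearZ_LR !gkc.
  rewrite -!linearD; apply/qP/Eiota; by rewrite linearD !gkc.
pose jL : {linear C -> quotT F} := mkLin jlin.
split=> //; split=> //; split.
  move=> c; have [b Hb] := Qsurj (mkLin (comp_lin jL c)).
  have pib p : pi (b p) = 0.
    have := Hb p => /qP /Epi ->; apply/iker; by exists (kc (c p)).
  have [b' Hb'] := (Imid b).1 pib.
  exists b' => p; rewrite -(gkc (c p)); apply: iotaE; apply/qP.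
  by rewrite Hb'; exact: (Hb p).
move=> b b' Hbb.
have Hq p : qL F (mkLin (comp_lin iota b) p) = qL F (mkLin (comp_lin iota b') p).
  by apply/qP/Eiota/Hbb.
have [k [k' [Hk [Hk' Hkk]]]] := Qkn _ _ Hq.
have [a Ha] := (Qmid k).1 Hk; have [a' Ha'] := (Qmid k').1 Hk'.
exists (mkLin (comp_lin f a)), (mkLin (comp_lin f a')).
split; first by move=> p; apply: gf.
split; first by move=> p; apply: gf.
move=> p; apply: iinj; rewrite !linearD.
by have := Hkk p; rewrite -Ha -Ha'.
Qed.

Theorem mainTheorem12 (S : nzSemiRingType) (P K L M : lSemiModType S)
  (iota : {linear K -> L}) (pi : {linear L -> M}) :
  ses_semimod iota pi -> e_projective L P ->
  e_projective K P /\ e_projective M P.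
Proof. by move=> Hs HL; split; [apply: projK Hs HL | apply: projM Hs HL]. Qed.
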